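(* Let $0<\varepsilon_0\le1$. For an expansion with coefficients $a_l$, $h_A\le l\le k_A$, set $a_l=0$ for $l\notin[h_A,k_A]$ (similarly for other letters). The following hold. (i) If $A$ is an $(h_A,k_A,\delta_A,G_A,\varepsilon_A)$-expansion with coefficients $a_l$ and $c\in\mathbb{R}$, then $C=cA$ satisfies $C(\varepsilon)=\sum_{l=h_A}^{k_A}ca_l\varepsilon^l+o_C(\varepsilon)$ with $|o_C(\varepsilon)|\le |c|G_A\varepsilon^{k_A+\delta_A}$ for $0<\varepsilon\le\varepsilon_A$ (i.e. $h_C=h_A,k_C=k_A$, $\delta_C=\delta_A$, $G_C=|c|G_A$, $\varepsilon_C=\varepsilon_A$). (ii) If $A$ is an $(h_A,k_A,\delta_A,G_A,\varepsilon_A)$-expansion with coefficients $a_l$ and $B$ an $(h_B,k_B,\delta_B,G_B,\varepsilon_B)$-expansion with coefficients $b_l$, then $C=A+B$ is an $(h_C,k_C,\delta_C,G_C,\varepsilon_C)$-expansion with $h_C=h_A\wedge h_B$, $k_C=k_A\wedge k_B$, coefficients $c_r=a_r+b_r$, $\delta_C=\delta_A\mathrm{I}(k_A<k_B)+(\delta_A\wedge\delta_B)\mathrm{I}(k_A=k_B)+\delta_B\mathrm{I}(k_B<k_A)\ \ (\ge\delta_A\wedge\delta_B)$, $\varepsilon_C=\varepsilon_A\wedge\varepsilon_B$, and $G_C=G_A\varepsilon_C^{k_A+\delta_A-k_C-\delta_C}+\sum_{k_C<i\le k_A}|a_i|\varepsilon_C^{i-k_C-\delta_C}+G_B\varepsilon_C^{k_B+\delta_B-k_C-\delta_C}+\sum_{k_C<j\le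 k_B}|b_j|\varepsilon_C^{j-k_C-\delta_C}$. (iii) Under the hypotheses of (ii), $C=A\cdot B$ is an $(h_C,k_C,\delta_C,G_C,\varepsilon_C)$-expansion with $h_C=h_A+h_B$, $k_C=(k_A+h_B)\wedge(k_B+h_A)$, coefficients $c_r=\sum_{i+j=r,\,h_A\le i\le k_A,\,h_B\le j\le k_B}a_ib_j$, $\delta_C=\delta_A\mathrm{I}(k_A+h_B<k_B+h_A)+(\delta_A\wedge\delta_B)\mathrm{I}(k_A+h_B=k_B+h_A)+\delta_B\mathrm{I}(k_A+h_B>k_B+h_A)\ (\ge\delta_A\wedge\delta_B)$, $\varepsilon_C=\varepsilon_A\wedge\varepsilon_B$, and $G_C=\sum_{k_C<i+j,\,h_A\le i\le k_A,\,h_B\le j\le k_B}|a_i||b_j|\varepsilon_C^{i+j-k_C-\delta_C}+G_A\sum_{h_B\le j\le k_B}|b_j|\varepsilon_C^{j+k_A+\delta_A-k_C-\delta_C}+G_B\sum_{h_A\le i\le k_A}|a_i|\varepsilon_C^{i+k_B+\delta_B-k_C-\delta_C}+G_AG_B\varepsilon_C^{k_A+k_B+\delta_A+\delta_B-k_C-\delta_C}$. (iv) Let $B$ be a pivotal $(h_B,k_B,\delta_B,G_B,\varepsilon_B)$-expansion with coefficients $b_l$. Put $h_C=-h_B$, $k_C=k_B-2h_B$, $c_{h_C}=b_{h_B}^{-1}$, $c_{h_C+n}=-b_{h_B}^{-1}\sum_{m=1}^n b_{h_B+m}c_{h_C+n-m}$ for $n=1,\dots,k_B-h_B$; $\delta_C=\delta_B$;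 $\tilde\varepsilon_B=\Big(\frac{|b_{h_B}|}{2\big(\sum_{h_B<i\le k_B}|b_i|\varepsilon_B^{i-h_B-\delta_B}+G_B\varepsilon_B^{k_B-h_B}\big)}\Big)^{1/\delta_B}$, $\varepsilon_C=\varepsilon_B\wedge\tilde\varepsilon_B$; $G_C=\big(\tfrac{|b_{h_B}|}{2}\big)^{-1}\Big(\sum_{k_B-h_B<i+j,\,h_B\le i\le k_B,\,h_C\le j\le k_C}|b_i||c_j|\varepsilon_C^{i+j-k_B+h_B-\delta_B}+G_B\sum_{h_C\le j\le k_C}|c_j|\varepsilon_C^{j+h_B}\Big)$. Then there exists $\varepsilon'_0$ with $\varepsilon_C\le\varepsilon'_0\le\varepsilon_0$ such that $B(\varepsilon)\ne0$ for $\varepsilon\in(0,\varepsilon'_0]$, and $C=1/B$ on $(0,\varepsilon'_0]$ is a pivotal $(h_C,k_C,\delta_C,G_C,\varepsilon_C)$-expansion with coefficients $c_l$. (v) Let $A$ be an $(h_A,k_A,\delta_A,G_A,\varepsilon_A)$-expansion with coefficients $a_l$ and $B$ a pivotal $(h_B,k_B,\delta_B,G_B,\varepsilon_B)$-expansion with coefficients $b_l$; let $h_C,k_C,c_l,\delta_C,G_C,\varepsilon_C,\tilde\varepsilon_B$ be as in (iv). Put $h_D=h_A-h_B$, $k_D=(k_A-h_B)\wedge(k_B-2h_B+h_A)$, $d_r=\sum_{i+j=r,\,h_A\le i\le k_A,\,h_C\le j\le k_C}a_ic_j$ for $h_D\le r\le k_D$, and $\delta_D=\delta_A\mathrm{I}(k_A-h_B<k_B-2h_B+h_A)+(\delta_A\wedge\delta_B)\mathrm{I}(k_A-h_B=k_B-2h_B+h_A)+\delta_B\mathrm{I}(k_A-h_B>k_B-2h_B+h_A)\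 (\ge\delta_A\wedge\delta_B)$. Then there exists $\varepsilon'_0$ with $\varepsilon_D\le\varepsilon'_0\le\varepsilon_0$ such that $B(\varepsilon)\ne0$ on $(0,\varepsilon'_0]$ and $D=A/B$ is an $(h_D,k_D,\delta_D,G_D,\varepsilon_D)$-expansion with coefficients $d_r$, where one may take either $\varepsilon_D=\varepsilon_A\wedge\varepsilon_C$ and $G_D=\sum_{k_D<i+j,\,h_A\le i\le k_A,\,h_C\le j\le k_C}|a_i||c_j|\varepsilon_D^{i+j-k_D-\delta_D}+G_A\sum_{h_C\le j\le k_C}|c_j|\varepsilon_D^{j+k_A+\delta_A-k_D-\delta_D}+G_C\sum_{h_A\le i\le k_A}|a_i|\varepsilon_D^{i+k_C+\delta_C-k_D-\delta_D}+G_AG_C\varepsilon_D^{k_A+k_C+\delta_A+\delta_C-k_D-\delta_D}$, or $\varepsilon_D=\varepsilon_A\wedge\varepsilon_B\wedge\tilde\varepsilon_B$ and $G_D=\big(\tfrac{|b_{h_B}|}{2}\big)^{-1}\Big(\sum_{k_A\wedge(h_A+k_B-h_B)<i+j,\,h_B\le i\le k_B,\,h_D\le j\le k_D}|b_i||d_j|\varepsilon_D^{i+j-k_D-h_B-\delta_D}+\sum_{k_A\wedge(h_A+k_B-h_B)<i\le k_A}|a_i|\varepsilon_D^{i-h_B-k_D-\delta_D}+G_A\varepsilon_D^{k_A+\delta_A-h_B-k_D-\delta_D}+G_B\sum_{h_D\le j\le k_D}|d_j|\varepsilon_D^{j+k_B+\delta_B-h_B-k_D-\delta_D}\Big)$.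
   Context: Let $0<\varepsilon_0\le1$. A function $A:(0,\varepsilon_0]\to\mathbb{R}$ (or defined on a smaller interval $(0,\varepsilon'_0]$) is an $(h,k,\delta,G,\varepsilon_A)$-expansion with coefficients $a_h,\dots,a_k$ (integers $h\le k$, reals $a_l$, $\delta\in(0,1]$, $G\in(0,\infty)$, $\varepsilon_A$ in $(0,\varepsilon_0]$ not exceeding the domain endpoint) if the remainder $o_A(\varepsilon):=A(\varepsilon)-\sum_{l=h}^k a_l\varepsilon^l$ satisfies $|o_A(\varepsilon)|\le G\varepsilon^{k+\delta}$ for $0<\varepsilon\le\varepsilon_A$. It is pivotal if $a_h\ne0$. $\mathrm{I}(\cdot)$ denotes the indicator, $\wedge$ the minimum. *)

(* Defs.v *)
From Stdlib Require Export Reals ZArith List.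
Export ListNotations.
Open Scope R_scope.

(* integers m, m+1, ..., n  (empty if n < m) *)
Definition zrange (m n : Z) : list Z :=
  map (fun t => (m + Z.of_nat t)%Z) (seq 0 (Z.to_nat (n - m + 1))).

Definition sumZ (m n : Z) (f : Z -> R) : R :=
  fold_right Rplus 0 (map f (zrange m n)).

Definition ind (b : bool) : R := if b then 1 else 0.

Definition cf (h k : Z) (a : Z -> R) (l : Z) : R :=
  if (Z.leb h l && Z.leb l k)%bool then a l else 0.

(* A is an (h,k,delta,G,epsA)-expansion with coefficients a_h..a_k,
   A being defined (at least) on (0, dom], epsA in (0, dom]. *)
Definition expansion (dom : R) (A : R -> R) (h k : Z) (a : Z -> R)
    (delta G epsA : R) : Prop :=
  (h <= k)%Z /\ 0 < delta <= 1 /\ 0 < G /\ 0 < epsA <= dom /\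
  forall e, 0 < e <= epsA ->
    Rabs (A e - sumZ h k (fun l => a l * powerRZ e l)) <= G * Rpower e (IZR k + delta).

Definition pivotal (dom : R) (A : R -> R) (h k : Z) (a : Z -> R)
    (delta G epsA : R) : Prop :=
  expansion dom A h k a delta G epsA /\ a h <> 0.

Definition delta_mix (x y : Z) (dA dB : R) : R :=
  dA * ind (Z.ltb x y) + Rmin dA dB * ind (Z.eqb x y) + dB * ind (Z.ltb y x).

Definition sum_G (hA kA : Z) (a : Z -> R) (dA GA : R)
                 (hB kB : Z) (b : Z -> R) (dB GB : R) (epsC : R) : R :=
  let kC := Z.min kA kB in
  let dC := delta_mix kA kB dA dB in
  GA * Rpower epsC (IZR kA + dA - IZR kC - dC)
  + sumZ (kC + 1) kA (fun i => Rabs (cf hA kA a i) * Rpower epsC (IZR i - IZR kC - dC))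
  + GB * Rpower epsC (IZR kB + dB - IZR kC - dC)
  + sumZ (kC + 1) kB (fun j => Rabs (cf hB kB b j) * Rpower epsC (IZR j - IZR kC - dC)).

Definition prod_coef (hA kA : Z) (a : Z -> R) (hB kB : Z) (b : Z -> R) (r : Z) : R :=
  sumZ hA kA (fun i => sumZ hB kB (fun j => if Z.eqb (i + j) r then a i * b j else 0)).

Definition prod_G (hA kA : Z) (a : Z -> R) (dA GA : R)
                  (hB kB : Z) (b : Z -> R) (dB GB : R) (kC : Z) (dC epsC : R) : R :=
  sumZ hA kA (fun i => sumZ hB kB (fun j =>
     if Z.ltb kC (i + j) then Rabs (a i) * Rabs (b j) * Rpower epsC (IZR (i + j) - IZR kC - dC)
     else 0))
  + GA * sumZ hB kB (fun j => Rabs (b j) * Rpower epsC (IZR j + IZR kA + dA - IZR kC - dC))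
  + GB * sumZ hA kA (fun i => Rabs (a i) * Rpower epsC (IZR i + IZR kB + dB - IZR kC - dC))
  + GA * GB * Rpower epsC (IZR kA + IZR kB + dA + dB - IZR kC - dC).

Definition recip_coefs (hB kB : Z) (b c : Z -> R) : Prop :=
  c (- hB)%Z = / b hB /\
  forall n : Z, (1 <= n <= kB - hB)%Z ->
    c (- hB + n)%Z = - / b hB * sumZ 1 n (fun m => b (hB + m)%Z * c (- hB + n - m)%Z).

Definition recip_eps_tilde (hB kB : Z) (b : Z -> R) (dB GB epsB : R) : R :=
  Rpower (Rabs (b hB) /
          (2 * (sumZ (hB + 1) kB (fun i => Rabs (b i) * Rpower epsB (IZR i - IZR hB - dB))
                + GB * Rpower epsB (IZR kB - IZR hB))))
         (1 / dB).

Definition recip_eps (hB kB : Z) (b : Z -> R) (dB GB epsB : R) : R :=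
  Rmin epsB (recip_eps_tilde hB kB b dB GB epsB).

Definition recip_G (hB kB : Z) (b c : Z -> R) (dB GB epsB : R) : R :=
  let hC := (- hB)%Z in
  let kC := (kB - 2 * hB)%Z in
  let epsC := recip_eps hB kB b dB GB epsB in
  / (Rabs (b hB) / 2) *
  ( sumZ hB kB (fun i => sumZ hC kC (fun j =>
       if Z.ltb (kB - hB) (i + j)
       then Rabs (b i) * Rabs (c j) * Rpower epsC (IZR (i + j) - IZR kB + IZR hB - dB)
       else 0))
    + GB * sumZ hC kC (fun j => Rabs (c j) * Rpower epsC (IZR j + IZR hB))).

Definition quot_G2 (hA kA : Z) (a : Z -> R) (dA GA : R)
                   (hB kB : Z) (b : Z -> R) (dB GB : R)
                   (hD kD : Z) (d : Z -> R) (dD epsD : R) : R :=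
  let m := Z.min kA (hA + kB - hB) in
  / (Rabs (b hB) / 2) *
  ( sumZ hB kB (fun i => sumZ hD kD (fun j =>
       if Z.ltb m (i + j)
       then Rabs (b i) * Rabs (d j) * Rpower epsD (IZR (i + j) - IZR kD - IZR hB - dD)
       else 0))
    + sumZ (m + 1) kA (fun i => Rabs (cf hA kA a i) * Rpower epsD (IZR i - IZR hB - IZR kD - dD))
    + GA * Rpower epsD (IZR kA + dA - IZR hB - IZR kD - dD)
    + GB * sumZ hD kD (fun j => Rabs (d j) * Rpower epsD (IZR j + IZR kB + dB - IZR hB - IZR kD - dD))).

(* Main.v *)
Require Import Defs.
From Stdlib Require Import Reals ZArith Lra Lia List Bool.
Open Scope R_scope.




Definition lsum (L : list Z) (f : Z -> R) : R := fold_right Rplus 0 (map f L).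

Lemma sumZ_lsum m n f : sumZ m n f = lsum (zrange m n) f.
Proof. reflexivity. Qed.

Lemma lsum_nil f : lsum nil f = 0. Proof. reflexivity. Qed.
Lemma lsum_cons x L f : lsum (x :: L) f = f x + lsum L f. Proof. reflexivity. Qed.
Lemma lsum_app L1 L2 f : lsum (L1 ++ L2) f = lsum L1 f + lsum L2 f.
Proof. induction L1; unfold lsum in *; simpl; [ring|]. rewrite IHL1; ring. Qed.

Lemma lsum_ext L f g : (forall x, In x L -> f x = g x) -> lsum L f = lsum L g.
Proof. induction L; intros H; simpl; auto. unfold lsum in *; simpl.
  rewrite H by (left; auto). rewrite IHL; auto. intros; apply H; right; auto. Qed.

Lemma lsum_le L f g : (forall x, In x L -> f x <= g x) -> lsum L f <= lsum L g.
Proof. induction L; intros H; unfold lsum in *; simpl; [lra|].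
  assert (f a <= g a) by (apply H; left; auto).
  assert (fold_right Rplus 0 (map f L) <= fold_right Rplus 0 (map g L)) by (apply IHL; intros; apply H; right; auto).
  lra. Qed.

Lemma lsum_plus L f g : lsum L (fun x => f x + g x) = lsum L f + lsum L g.
Proof. induction L; unfold lsum in *; simpl; [ring|]. rewrite IHL; ring. Qed.

Lemma lsum_minus L f g : lsum L (fun x => f x - g x) = lsum L f - lsum L g.
Proof. induction L; unfold lsum in *; simpl; [ring|]. rewrite IHL; ring. Qed.

Lemma lsum_scal L c f : lsum L (fun x => c * f x) = c * lsum L f.
Proof. induction L; unfold lsum in *; simpl; [ring|]. rewrite IHL; ring. Qed.

Lemma lsum_scalr L c f : lsum L (fun x => f x * c) = lsum L f * c.
Proof. induction L; unfold lsum in *; simpl; [ring|]. rewrite IHL; ring. Qed.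

Lemma lsum_zero L f : (forall x, In x L -> f x = 0) -> lsum L f = 0.
Proof. intros H. transitivity (lsum L (fun _ => 0)). apply lsum_ext; auto.
  induction L; unfold lsum in *; simpl; auto. rewrite IHL; [ring|]. intros; apply H; right; auto. Qed.

Lemma lsum_abs_le L f g : (forall x, In x L -> Rabs (f x) <= g x) -> Rabs (lsum L f) <= lsum L g.
Proof. induction L; intros H; unfold lsum in *; simpl. rewrite Rabs_R0; lra.
  eapply Rle_trans. apply Rabs_triang.
  assert (Rabs (f a) <= g a) by (apply H; left; auto).
  assert (Rabs (fold_right Rplus 0 (map f L)) <= fold_right Rplus 0 (map g L)) by (apply IHL; intros; apply H; right; auto).
  lra. Qed.

Lemma lsum_nonneg L f : (forall x, In x L -> 0 <= f x) -> 0 <= lsum L f.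
Proof. intros H. replace 0 with (lsum L (fun _ => 0)). apply lsum_le; auto. apply lsum_zero; auto. Qed.

Lemma lsum_ge_elem L f y : (forall x, In x L -> 0 <= f x) -> In y L -> f y <= lsum L f.
Proof. induction L; intros H Hy; simpl in Hy; [contradiction|]. unfold lsum in *; simpl.
  assert (0 <= fold_right Rplus 0 (map f L)) by (apply (lsum_nonneg L f); intros; apply H; right; auto).
  destruct Hy as [<-|Hy]. lra.
  assert (f y <= fold_right Rplus 0 (map f L)) by (apply IHL; auto; intros; apply H; right; auto).
  assert (0 <= f a) by (apply H; left; auto). lra. Qed.

Lemma lsum_swap L1 L2 f : lsum L1 (fun i => lsum L2 (fun j => f i j)) = lsum L2 (fun j => lsum L1 (fun i => f i j)).
Proof. induction L1; simpl. symmetry; apply lsum_zero; auto.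
  rewrite lsum_cons, IHL1. rewrite <- lsum_plus. apply lsum_ext; intros; rewrite lsum_cons; ring. Qed.

Lemma lsum_mult L1 L2 f g : lsum L1 f * lsum L2 g = lsum L1 (fun i => lsum L2 (fun j => f i * g j)).
Proof. rewrite <- lsum_scalr. apply lsum_ext; intros. rewrite <- lsum_scal; auto. Qed.

Lemma lsum_ind L r g : NoDup L -> lsum L (fun i => if Z.eqb i r then g i else 0) = if in_dec Z.eq_dec r L then g r else 0.
Proof. induction L; intros ND; simpl; auto. inversion ND; subst.
  rewrite lsum_cons, IHL by auto.
  destruct (Z.eqb_spec a r).
  - subst. destruct (Z.eq_dec r r); [|congruence]. destruct (in_dec Z.eq_dec r L); [contradiction|]. ring.
  - destruct (in_dec Z.eq_dec r L); destruct (Z.eq_dec a r); try congruence; ring. Qed.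

Lemma zrange_In m n x : In x (zrange m n) <-> (m <= x <= n)%Z.
Proof. unfold zrange. rewrite in_map_iff. split.
  - intros [t [<- Ht]]. apply in_seq in Ht. lia.
  - intros H. exists (Z.to_nat (x - m)). split. lia. apply in_seq. lia. Qed.

Lemma zrange_NoDup m n : NoDup (zrange m n).
Proof. unfold zrange. apply NoDup_map_NoDup_ForallPairs. intros x y _ _ H; lia. apply seq_NoDup. Qed.

Lemma map_seq_shift {A} b : forall a (f : nat -> A), map f (seq a b) = map (fun t => f (a + t)%nat) (seq 0 b).
Proof. induction b; intros a f; simpl; auto. rewrite Nat.add_0_r. f_equal.
  rewrite (IHb (S a)), (IHb 1%nat (fun t => f (a + t)%nat)). apply map_ext; intros; f_equal; lia. Qed.

Lemma zrange_split m k n : (m - 1 <= k <= n)%Z -> zrange m n = zrange m k ++ zrange (k+1) n.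
Proof. intros H. unfold zrange.
  replace (Z.to_nat (n - m + 1)) with (Z.to_nat (k - m + 1) + Z.to_nat (n - (k+1) + 1))%nat by lia.
  rewrite seq_app, map_app. f_equal. rewrite map_seq_shift. apply map_ext; intros; lia. Qed.

Lemma zrange_shift m n s : zrange (m + s) (n + s) = map (fun x => (x + s)%Z) (zrange m n).
Proof. unfold zrange. rewrite map_map. replace (n + s - (m + s) + 1)%Z with (n - m + 1)%Z by lia.
  apply map_ext; intros; lia. Qed.

Lemma lsum_map L g f : lsum (map g L) f = lsum L (fun x => f (g x)).
Proof. unfold lsum. rewrite map_map. auto. Qed.

Lemma zrange_empty m n : (n < m)%Z -> zrange m n = nil.
Proof. intros; unfold zrange. replace (Z.to_nat (n - m + 1)) with 0%nat by lia. auto. Qed.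

Lemma sumZ_split m k n f : (m - 1 <= k <= n)%Z -> sumZ m n f = sumZ m k f + sumZ (k+1) n f.
Proof. intros H. rewrite !sumZ_lsum, (zrange_split m k n) by lia. apply lsum_app. Qed.

Lemma sumZ_ext m n f g : (forall x, (m <= x <= n)%Z -> f x = g x) -> sumZ m n f = sumZ m n g.
Proof. intros H. apply lsum_ext. intros x Hx; apply H, zrange_In; auto. Qed.

Lemma sumZ_le m n f g : (forall x, (m <= x <= n)%Z -> f x <= g x) -> sumZ m n f <= sumZ m n g.
Proof. intros H. apply lsum_le. intros x Hx; apply H, zrange_In; auto. Qed.

Lemma sumZ_abs_le m n f g : (forall x, (m <= x <= n)%Z -> Rabs (f x) <= g x) -> Rabs (sumZ m n f) <= sumZ m n g.
Proof. intros H. apply lsum_abs_le. intros x Hx; apply H, zrange_In; auto. Qed.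

Lemma sumZ_nonneg m n f : (forall x, (m <= x <= n)%Z -> 0 <= f x) -> 0 <= sumZ m n f.
Proof. intros H. apply lsum_nonneg. intros x Hx; apply H, zrange_In; auto. Qed.

Lemma sumZ_ge_elem m n f y : (forall x, (m <= x <= n)%Z -> 0 <= f x) -> (m <= y <= n)%Z -> f y <= sumZ m n f.
Proof. intros H Hy. apply lsum_ge_elem. intros x Hx; apply H, zrange_In; auto. apply zrange_In; auto. Qed.

Lemma sumZ_zero m n f : (forall x, (m <= x <= n)%Z -> f x = 0) -> sumZ m n f = 0.
Proof. intros H. apply lsum_zero. intros x Hx; apply H, zrange_In; auto. Qed.

Lemma sumZ_ind_in m n r g : (m <= r <= n)%Z -> sumZ m n (fun i => if Z.eqb i r then g i else 0) = g r.
Proof. intros H. rewrite sumZ_lsum, lsum_ind by apply zrange_NoDup.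
  destruct (in_dec Z.eq_dec r (zrange m n)); auto. exfalso; apply n0, zrange_In; auto. Qed.

Lemma sumZ_ind_out m n r g : ~ (m <= r <= n)%Z -> sumZ m n (fun i => if Z.eqb i r then g i else 0) = 0.
Proof. intros H. rewrite sumZ_lsum, lsum_ind by apply zrange_NoDup.
  destruct (in_dec Z.eq_dec r (zrange m n)); auto. exfalso; apply H, zrange_In; auto. Qed.

Lemma sumZ_shift m n s f : sumZ (m + s) (n + s) f = sumZ m n (fun x => f (x + s)%Z).
Proof. rewrite !sumZ_lsum, zrange_shift, lsum_map. auto. Qed.

Lemma sumZ_empty m n f : (n < m)%Z -> sumZ m n f = 0.
Proof. intros; rewrite sumZ_lsum, zrange_empty; auto. Qed.

Lemma sumZ_extend h k lo hi a p : (lo <= h)%Z -> (h <= k)%Z -> (k <= hi)%Z ->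
  sumZ h k (fun l => a l * p l) = sumZ lo hi (fun l => cf h k a l * p l).
Proof. intros. rewrite (sumZ_split lo (h-1) hi) by lia. rewrite (sumZ_split (h-1+1) k hi) by lia.
  replace (h - 1 + 1)%Z with h by lia.
  rewrite (sumZ_zero lo (h-1)), (sumZ_zero (k+1) hi).
  rewrite Rplus_0_l, Rplus_0_r. apply sumZ_ext; intros. unfold cf.
  replace (Z.leb h x && Z.leb x k)%bool with true; auto. symmetry; apply andb_true_iff; split; apply Z.leb_le; lia.
  all: intros x Hx; unfold cf; replace (Z.leb h x && Z.leb x k)%bool with false; [ring|].
  all: symmetry; apply andb_false_iff; first [left; apply Z.leb_gt; lia | right; apply Z.leb_gt; lia]. Qed.

Lemma regroup L1 L2 lo hi (F : Z -> Z -> Z -> R) :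
  lsum L1 (fun i => lsum L2 (fun j => if ((lo <=? i+j) && (i+j <=? hi))%Z%bool then F i j (i+j)%Z else 0)) =
  sumZ lo hi (fun n => lsum L1 (fun i => lsum L2 (fun j => if Z.eqb (i+j) n then F i j n else 0))).
Proof. rewrite sumZ_lsum, (lsum_swap (zrange lo hi)). apply lsum_ext; intros i _.
  rewrite (lsum_swap (zrange lo hi)). apply lsum_ext; intros j _.
  transitivity (lsum (zrange lo hi) (fun n => if Z.eqb n (i+j) then F i j n else 0)).
  2:{ apply lsum_ext; intros; rewrite Z.eqb_sym; auto. }
  rewrite lsum_ind by apply zrange_NoDup.
  destruct (in_dec Z.eq_dec (i+j)%Z (zrange lo hi)) as [Hi|Hi]; rewrite zrange_In in Hi.
  - replace ((lo <=? i+j) && (i+j <=? hi))%Z%bool with true; auto. symmetry; apply andb_true_iff; split; apply Z.leb_le; lia.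
  - replace ((lo <=? i+j) && (i+j <=? hi))%Z%bool with false; auto. symmetry; apply andb_false_iff.
    destruct (Z.le_gt_cases lo (i+j)); [right|left]; apply Z.leb_gt; lia. Qed.

Lemma Rpower_pos x y : 0 < Rpower x y.
Proof. unfold Rpower; apply exp_pos. Qed.

Lemma pw e S X Y K : 0 < e -> e <= S -> 0 <= Y -> X = Y + K -> Rpower e X <= Rpower S Y * Rpower e K.
Proof. intros He HS HY ->. rewrite Rpower_plus. apply Rmult_le_compat_r. left; apply Rpower_pos.
  apply Rle_Rpower_l; auto. Qed.

Lemma pw_abs e S X Y K c : 0 < e -> e <= S -> 0 <= Y -> X = Y + K -> c * Rpower e X <= c * Rpower S Y * Rpower e K \/ c < 0.
Proof. intros. destruct (Rle_lt_dec 0 c); [left|right; auto]. rewrite Rmult_assoc. apply Rmult_le_compat_l; auto. apply pw; auto. Qed.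

Lemma pz e l : 0 < e -> powerRZ e l = Rpower e (IZR l).
Proof. apply powerRZ_Rpower. Qed.

Lemma dm_props x y dA dB : 0 < dA <= 1 -> 0 < dB <= 1 ->
  let m := Z.min x y in let d := delta_mix x y dA dB in
  0 < d <= 1 /\ IZR m <= IZR x /\ IZR m <= IZR y /\
  0 <= IZR x + dA - IZR m - d /\ 0 <= IZR y + dB - IZR m - d.
Proof. intros HA HB m d. unfold d, m, delta_mix.
  destruct (Z.lt_total x y) as [H|[H|H]].
  - rewrite Z.min_l by lia. replace (x <? y)%Z with true by (symmetry; apply Z.ltb_lt; lia).
    replace (x =? y)%Z with false by (symmetry; apply Z.eqb_neq; lia).
    replace (y <? x)%Z with false by (symmetry; apply Z.ltb_ge; lia).
    assert (IZR x + 1 <= IZR y) by (rewrite <- plus_IZR; apply IZR_le; lia).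
    unfold Defs.ind; repeat split; lra.
  - subst. rewrite Z.min_id. replace (y <? y)%Z with false by (symmetry; apply Z.ltb_ge; lia).
    rewrite Z.eqb_refl. pose proof (Rmin_l dA dB); pose proof (Rmin_r dA dB).
    assert (0 < Rmin dA dB) by (apply Rmin_glb_lt; lra). unfold Defs.ind; repeat split; lra.
  - rewrite Z.min_r by lia. replace (x <? y)%Z with false by (symmetry; apply Z.ltb_ge; lia).
    replace (x =? y)%Z with false by (symmetry; apply Z.eqb_neq; lia).
    replace (y <? x)%Z with true by (symmetry; apply Z.ltb_lt; lia).
    assert (IZR y + 1 <= IZR x) by (rewrite <- plus_IZR; apply IZR_le; lia).
    unfold Defs.ind; repeat split; lra. Qed.

Lemma sumZ_plus m n f g : sumZ m n (fun x => f x + g x) = sumZ m n f + sumZ m n g.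
Proof. apply lsum_plus. Qed.
Lemma sumZ_scal m n c f : sumZ m n (fun x => c * f x) = c * sumZ m n f.
Proof. apply lsum_scal. Qed.
Lemma sumZ_scalr m n c f : sumZ m n (fun x => f x * c) = sumZ m n f * c.
Proof. apply lsum_scalr. Qed.
Lemma sumZ_swap m n p q f : sumZ m n (fun i => sumZ p q (fun j => f i j)) = sumZ p q (fun j => sumZ m n (fun i => f i j)).
Proof. apply lsum_swap. Qed.
Lemma sumZ_mult m n p q f g : sumZ m n f * sumZ p q g = sumZ m n (fun i => sumZ p q (fun j => f i * g j)).
Proof. apply lsum_mult. Qed.

Lemma term_bound e S i Y K c : 0 < e -> e <= S -> 0 <= Y -> IZR i = Y + K ->
  Rabs (c * powerRZ e i) <= Rabs c * Rpower S Y * Rpower e K.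
Proof. intros. rewrite pz by auto. rewrite Rabs_mult, (Rabs_pos_eq (Rpower _ _)) by (left; apply Rpower_pos).
  rewrite Rmult_assoc. apply Rmult_le_compat_l. apply Rabs_pos. apply pw; auto. Qed.

Lemma Rmin_pos a b : 0 < a -> 0 < b -> 0 < Rmin a b.
Proof. intros; apply Rmin_glb_lt; auto. Qed.

Lemma part1 dom A hA kA a dA GA epsA c : expansion dom A hA kA a dA GA epsA ->
     forall e, 0 < e <= epsA ->
       Rabs (c * A e - sumZ hA kA (fun l => c * a l * powerRZ e l))
         <= Rabs c * GA * Rpower e (IZR kA + dA).
Proof. intros [_ [_ [_ [_ H]]]] e He.
  replace (sumZ hA kA (fun l => c * a l * powerRZ e l)) with (c * sumZ hA kA (fun l => a l * powerRZ e l)).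
  rewrite <- Rmult_minus_distr_l, Rabs_mult, Rmult_assoc. apply Rmult_le_compat_l. apply Rabs_pos. apply H; auto.
  rewrite <- sumZ_scal. apply sumZ_ext; intros; ring. Qed.

Lemma part2 dom (A B : R -> R) (hA kA hB kB : Z) (a b : Z -> R) (dA GA epsA dB GB epsB : R) :
     expansion dom A hA kA a dA GA epsA ->
     expansion dom B hB kB b dB GB epsB ->
     expansion dom (fun e => A e + B e) (Z.min hA hB) (Z.min kA kB)
       (fun r => cf hA kA a r + cf hB kB b r)
       (delta_mix kA kB dA dB)
       (sum_G hA kA a dA GA hB kB b dB GB (Rmin epsA epsB))
       (Rmin epsA epsB).
Proof. intros [hkA [dA_ [GA_ [eA_ bA]]]] [hkB [dB_ [GB_ [eB_ bB]]]].
  destruct (dm_props kA kB dA dB dA_ dB_) as [dC_ [mA [mB [xA xB]]]].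
  set (kC := Z.min kA kB) in *. set (dC := delta_mix kA kB dA dB) in *. set (S := Rmin epsA epsB).
  assert (S_ : 0 < S) by (apply Rmin_pos; lra).
  assert (SA : S <= epsA) by apply Rmin_l. assert (SB : S <= epsB) by apply Rmin_r.
  assert (hC1 : (Z.min hA hB <= hA)%Z) by lia. assert (hC2 : (Z.min hA hB <= hB)%Z) by lia.
  assert (kC1 : (kC <= kA)%Z) by lia. assert (kC2 : (kC <= kB)%Z) by lia.
  assert (Hsum : forall kk (aa : Z -> R), (kC <= kk)%Z -> 0 <= sumZ (kC + 1) kk (fun i => Rabs (aa i) * Rpower S (IZR i - IZR kC - dC))).
  { intros; apply sumZ_nonneg; intros; apply Rmult_le_pos; [apply Rabs_pos| left; apply Rpower_pos]. }
  split; [lia|]. split; [auto|]. split.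
  { unfold sum_G. fold kC dC. pose proof (Hsum kA (cf hA kA a) kC1). pose proof (Hsum kB (cf hB kB b) kC2).
    pose proof (Rpower_pos S (IZR kA + dA - IZR kC - dC)). pose proof (Rpower_pos S (IZR kB + dB - IZR kC - dC)).
    assert (0 < GA * Rpower S (IZR kA + dA - IZR kC - dC)) by (apply Rmult_lt_0_compat; auto).
    assert (0 < GB * Rpower S (IZR kB + dB - IZR kC - dC)) by (apply Rmult_lt_0_compat; auto). lra. }
  split. { split; auto. lra. }
  intros e He. assert (eA : 0 < e <= epsA) by lra. assert (eB : 0 < e <= epsB) by lra.
  pose proof (bA e eA) as oA. pose proof (bB e eB) as oB.
  set (E := Rpower e (IZR kC + dC)).
  assert (PA : sumZ hA kA (fun l => a l * powerRZ e l) = sumZ (Z.min hA hB) kC (fun l => cf hA kA a l * powerRZ e l) + sumZ (kC+1) kA (fun l => cf hA kA a l * powerRZ e l)).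
  { rewrite (sumZ_extend hA kA (Z.min hA hB) kA) by lia. apply sumZ_split. lia. }
  assert (PB : sumZ hB kB (fun l => b l * powerRZ e l) = sumZ (Z.min hA hB) kC (fun l => cf hB kB b l * powerRZ e l) + sumZ (kC+1) kB (fun l => cf hB kB b l * powerRZ e l)).
  { rewrite (sumZ_extend hB kB (Z.min hA hB) kB) by lia. apply sumZ_split. lia. }
  assert (PC : sumZ (Z.min hA hB) kC (fun l => (cf hA kA a l + cf hB kB b l) * powerRZ e l) = sumZ (Z.min hA hB) kC (fun l => cf hA kA a l * powerRZ e l) + sumZ (Z.min hA hB) kC (fun l => cf hB kB b l * powerRZ e l)).
  { rewrite <- sumZ_plus. apply sumZ_ext; intros; ring. }
  assert (T : forall kk (aa : Z -> R), (kC <= kk)%Z -> Rabs (sumZ (kC+1) kk (fun l => aa l * powerRZ e l)) <= sumZ (kC + 1) kk (fun i => Rabs (aa i) * Rpower S (IZR i - IZR kC - dC)) * E).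
  { intros kk aa Hk. rewrite <- sumZ_scalr. apply sumZ_abs_le. intros i Hi. apply term_bound; try lra.
    assert (IZR (kC + 1) <= IZR i) by (apply IZR_le; lia). rewrite plus_IZR in H. lra. }
  assert (GAb : GA * Rpower e (IZR kA + dA) <= GA * Rpower S (IZR kA + dA - IZR kC - dC) * E).
  { rewrite Rmult_assoc. apply Rmult_le_compat_l. lra. apply pw; try lra. }
  assert (GBb : GB * Rpower e (IZR kB + dB) <= GB * Rpower S (IZR kB + dB - IZR kC - dC) * E).
  { rewrite Rmult_assoc. apply Rmult_le_compat_l. lra. apply pw; try lra. }
  pose proof (T kA (cf hA kA a) kC1). pose proof (T kB (cf hB kB b) kC2).
  rewrite PC. unfold sum_G. fold kC dC S. fold E.
  match goal with |- Rabs ?X <= _ => replace X with ((A e - sumZ hA kA (fun l => a l * powerRZ e l)) + (B e - sumZ hB kB (fun l => b l * powerRZ e l)) + sumZ (kC+1) kA (fun l => cf hA kA a l * powerRZ e l) + sumZ (kC+1) kB (fun l => cf hB kB b l * powerRZ e l)) by (rewrite PA, PB; ring) end.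
  eapply Rle_trans. apply Rabs_triang. eapply Rle_trans. apply Rplus_le_compat_r. apply Rabs_triang.
  eapply Rle_trans. apply Rplus_le_compat_r. apply Rplus_le_compat_r. apply Rabs_triang. lra. Qed.

Lemma regroupZ m n p q lo hi (F : Z -> Z -> Z -> R) :
  sumZ m n (fun i => sumZ p q (fun j => if ((lo <=? i+j) && (i+j <=? hi))%Z%bool then F i j (i+j)%Z else 0)) =
  sumZ lo hi (fun r => sumZ m n (fun i => sumZ p q (fun j => if Z.eqb (i+j) r then F i j r else 0))).
Proof. apply regroup. Qed.

Lemma abs_P h k a e : 0 < e -> Rabs (sumZ h k (fun l => a l * powerRZ e l)) <= sumZ h k (fun l => Rabs (a l) * Rpower e (IZR l)).
Proof. intros. apply sumZ_abs_le; intros. rewrite pz, Rabs_mult, (Rabs_pos_eq (Rpower _ _)) by (auto; left; apply Rpower_pos). lra. Qed.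

Lemma tail_bound h k a e S X0 K (Yf : Z -> R) : 0 < e -> e <= S ->
  (forall i, (h <= i <= k)%Z -> IZR i + X0 = Yf i + K /\ 0 <= Yf i) ->
  sumZ h k (fun i => Rabs (a i) * Rpower e (IZR i)) * Rpower e X0 <= sumZ h k (fun i => Rabs (a i) * Rpower S (Yf i)) * Rpower e K.
Proof. intros He HS H. rewrite <- !sumZ_scalr. apply sumZ_le. intros i Hi. destruct (H i Hi) as [H1 H2].
  rewrite !Rmult_assoc, <- Rpower_plus. apply Rmult_le_compat_l. apply Rabs_pos. apply pw; auto. Qed.

Lemma split_if (c : bool) (x : R) : x = (if c then 0 else x) + (if c then x else 0).
Proof. destruct c; ring. Qed.

Lemma part3 domA domB dom (A B : R -> R) (hA kA hB kB : Z) (a b : Z -> R) (dA GA epsA dB GB epsB : R) :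
     expansion domA A hA kA a dA GA epsA ->
     expansion domB B hB kB b dB GB epsB ->
     Rmin epsA epsB <= dom ->
     let kC := Z.min (kA + hB) (kB + hA) in
     let dC := delta_mix (kA + hB) (kB + hA) dA dB in
     let epsC := Rmin epsA epsB in
     expansion dom (fun e => A e * B e) (hA + hB) kC
       (prod_coef hA kA a hB kB b) dC
       (prod_G hA kA a dA GA hB kB b dB GB kC dC epsC) epsC.
Proof. intros [hkA [dA_ [GA_ [eA_ bA]]]] [hkB [dB_ [GB_ [eB_ bB]]]] Hdom kC dC S.
  destruct (dm_props (kA + hB) (kB + hA) dA dB dA_ dB_) as [dC_ [mA [mB [xA xB]]]].
  fold kC dC in mA, mB, xA, xB, dC_. rewrite plus_IZR in *.
  assert (S_ : 0 < S) by (apply Rmin_pos; lra).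
  assert (SA : S <= epsA) by apply Rmin_l. assert (SB : S <= epsB) by apply Rmin_r.
  assert (IhA : IZR hA <= IZR kA) by (apply IZR_le; lia). assert (IhB : IZR hB <= IZR kB) by (apply IZR_le; lia).
  split; [lia|]. split; [auto|]. split.
  { unfold prod_G. 
    assert (0 <= sumZ hA kA (fun i => sumZ hB kB (fun j => if (kC <? i + j)%Z then Rabs (a i) * Rabs (b j) * Rpower S (IZR (i + j) - IZR kC - dC) else 0))).
    { apply sumZ_nonneg; intros; apply sumZ_nonneg; intros. destruct (kC <? x+x0)%Z; [|lra].
      pose proof (Rpower_pos S (IZR (x + x0) - IZR kC - dC)). pose proof (Rabs_pos (a x)). pose proof (Rabs_pos (b x0)).
      apply Rmult_le_pos; [apply Rmult_le_pos|]; lra. }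
    assert (0 <= sumZ hB kB (fun j => Rabs (b j) * Rpower S (IZR j + IZR kA + dA - IZR kC - dC))).
    { apply sumZ_nonneg; intros. apply Rmult_le_pos. apply Rabs_pos. left; apply Rpower_pos. }
    assert (0 <= sumZ hA kA (fun i => Rabs (a i) * Rpower S (IZR i + IZR kB + dB - IZR kC - dC))).
    { apply sumZ_nonneg; intros. apply Rmult_le_pos. apply Rabs_pos. left; apply Rpower_pos. }
    pose proof (Rpower_pos S (IZR kA + IZR kB + dA + dB - IZR kC - dC)).
    assert (0 <= GA * sumZ hB kB (fun j => Rabs (b j) * Rpower S (IZR j + IZR kA + dA - IZR kC - dC))) by (apply Rmult_le_pos; lra).
    assert (0 <= GB * sumZ hA kA (fun i => Rabs (a i) * Rpower S (IZR i + IZR kB + dB - IZR kC - dC))) by (apply Rmult_le_pos; lra).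
    assert (0 < GA * GB * Rpower S (IZR kA + IZR kB + dA + dB - IZR kC - dC)) by (apply Rmult_lt_0_compat; [apply Rmult_lt_0_compat|]; lra).
    lra. }
  split. { split; auto. }
  intros e He. assert (eA : 0 < e <= epsA) by lra. assert (eB : 0 < e <= epsB) by lra.
  pose proof (bA e eA) as oA. pose proof (bB e eB) as oB.
  set (E := Rpower e (IZR kC + dC)).
  set (PA := sumZ hA kA (fun l => a l * powerRZ e l)) in *.
  set (PB := sumZ hB kB (fun l => b l * powerRZ e l)) in *.
  set (F := fun i j => a i * b j * powerRZ e (i + j)).
  assert (PAB : PA * PB = sumZ hA kA (fun i => sumZ hB kB (fun j => if (kC <? i + j)%Z then 0 else F i j)) + sumZ hA kA (fun i => sumZ hB kB (fun j => if (kC <? i + j)%Z then F i j else 0))).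
  { unfold PA, PB. rewrite sumZ_mult, <- sumZ_plus. apply sumZ_ext; intros. rewrite <- sumZ_plus. apply sumZ_ext; intros.
    rewrite <- split_if. unfold F. rewrite powerRZ_add by lra. ring. }
  assert (Low : sumZ hA kA (fun i => sumZ hB kB (fun j => if (kC <? i + j)%Z then 0 else F i j)) = sumZ (hA + hB) kC (fun l => prod_coef hA kA a hB kB b l * powerRZ e l)).
  { transitivity (sumZ hA kA (fun i => sumZ hB kB (fun j => if (((hA + hB) <=? i+j) && (i+j <=? kC))%Z%bool then a i * b j * powerRZ e (i+j)%Z else 0))).
    { apply sumZ_ext; intros i Hi; apply sumZ_ext; intros j Hj. unfold F.
      destruct (Z.ltb_spec kC (i+j)).
      - replace ((hA + hB <=? i + j) && (i + j <=? kC))%Z%bool with false; auto. symmetry; apply andb_false_iff; right; apply Z.leb_gt; lia.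
      - replace ((hA + hB <=? i + j) && (i + j <=? kC))%Z%bool with true; auto. symmetry; apply andb_true_iff; split; apply Z.leb_le; lia. }
    rewrite (regroupZ hA kA hB kB (hA+hB) kC (fun i j r => a i * b j * powerRZ e r)).
    apply sumZ_ext; intros r Hr. unfold prod_coef. rewrite <- sumZ_scalr. apply sumZ_ext; intros i _. rewrite <- sumZ_scalr.
    apply sumZ_ext; intros j _. destruct (i + j =? r)%Z; ring. }
  assert (High : Rabs (sumZ hA kA (fun i => sumZ hB kB (fun j => if (kC <? i + j)%Z then F i j else 0))) <=
     sumZ hA kA (fun i => sumZ hB kB (fun j => if (kC <? i + j)%Z then Rabs (a i) * Rabs (b j) * Rpower S (IZR (i + j) - IZR kC - dC) else 0)) * E).
  { rewrite <- sumZ_scalr. apply sumZ_abs_le; intros i Hi. rewrite <- sumZ_scalr. apply sumZ_abs_le; intros j Hj.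
    destruct (Z.ltb_spec kC (i+j)).
    - unfold F. rewrite <- (Rabs_mult (a i)). apply term_bound; try lra.
      assert (IZR (kC + 1) <= IZR (i+j)) by (apply IZR_le; lia). rewrite plus_IZR in H0. lra.
    - rewrite Rabs_R0; lra. }
  assert (T1 : Rabs (PA * (B e - PB)) <= GB * sumZ hA kA (fun i => Rabs (a i) * Rpower S (IZR i + IZR kB + dB - IZR kC - dC)) * E).
  { rewrite Rabs_mult. eapply Rle_trans. apply Rmult_le_compat; try apply Rabs_pos. apply abs_P; lra. apply oB.
    match goal with |- ?X * (GB * ?Y) <= _ => replace (X * (GB * Y)) with (GB * (X * Y)) by ring end.
    rewrite Rmult_assoc. apply Rmult_le_compat_l. lra. apply tail_bound; try lra. intros i Hi. assert (IZR hA <= IZR i) by (apply IZR_le; lia). split; lra. }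
  assert (T2 : Rabs ((A e - PA) * PB) <= GA * sumZ hB kB (fun j => Rabs (b j) * Rpower S (IZR j + IZR kA + dA - IZR kC - dC)) * E).
  { rewrite Rabs_mult, Rmult_comm. eapply Rle_trans. apply Rmult_le_compat; try apply Rabs_pos. apply abs_P; lra. apply oA.
    match goal with |- ?X * (GA * ?Y) <= _ => replace (X * (GA * Y)) with (GA * (X * Y)) by ring end.
    rewrite Rmult_assoc. apply Rmult_le_compat_l. lra. apply tail_bound; try lra. intros j Hj. assert (IZR hB <= IZR j) by (apply IZR_le; lia). split; lra. }
  assert (T3 : Rabs ((A e - PA) * (B e - PB)) <= GA * GB * Rpower S (IZR kA + IZR kB + dA + dB - IZR kC - dC) * E).
  { rewrite Rabs_mult. eapply Rle_trans. apply Rmult_le_compat; try apply Rabs_pos. apply oA. apply oB.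
    replace (GA * Rpower e (IZR kA + dA) * (GB * Rpower e (IZR kB + dB))) with (GA * GB * Rpower e (IZR kA + IZR kB + dA + dB)).
    rewrite (Rmult_assoc (GA * GB) (Rpower S _)). apply Rmult_le_compat_l. apply Rmult_le_pos; lra. apply pw; try lra.
    replace (IZR kA + IZR kB + dA + dB) with ((IZR kA + dA) + (IZR kB + dB)) by ring. rewrite Rpower_plus; ring. }
  set (Hi := sumZ hA kA (fun i => sumZ hB kB (fun j => if (kC <? i + j)%Z then F i j else 0))) in *.
  set (Lo := sumZ hA kA (fun i => sumZ hB kB (fun j => if (kC <? i + j)%Z then 0 else F i j))) in *.
  assert (LoE : Lo = PA * PB - Hi) by (rewrite PAB; ring).
  rewrite <- Low, LoE. unfold prod_G. fold E.
  match goal with |- Rabs ?X <= _ => replace X with (Hi + PA * (B e - PB) + (A e - PA) * PB + (A e - PA) * (B e - PB)) by ring end.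
  eapply Rle_trans. apply Rabs_triang. eapply Rle_trans. apply Rplus_le_compat_r. apply Rabs_triang.
  eapply Rle_trans. apply Rplus_le_compat_r. apply Rplus_le_compat_r. apply Rabs_triang. lra. Qed.

Lemma sumZ_single m f : sumZ m m f = f m.
Proof. unfold sumZ, zrange. replace (Z.to_nat (m - m + 1)) with 1%nat by lia. simpl. rewrite Z.add_0_r. ring. Qed.

Lemma Bbound dom B hB kB b dB GB epsB : pivotal dom B hB kB b dB GB epsB ->
  forall e, 0 < e <= Rmin epsB (recip_eps_tilde hB kB b dB GB epsB) ->
  Rabs (B e - b hB * powerRZ e hB) <= Rabs (b hB) / 2 * Rpower e (IZR hB).
Proof. intros [[hk [d_ [G_ [eps_ bB]]]] bh] e He.
  assert (e1 : e <= epsB) by (pose proof (Rmin_l epsB (recip_eps_tilde hB kB b dB GB epsB)); lra).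
  assert (e2 : e <= recip_eps_tilde hB kB b dB GB epsB) by (pose proof (Rmin_r epsB (recip_eps_tilde hB kB b dB GB epsB)); lra).
  set (Sig1 := sumZ (hB + 1) kB (fun i => Rabs (b i) * Rpower epsB (IZR i - IZR hB - dB))).
  set (Sig := Sig1 + GB * Rpower epsB (IZR kB - IZR hB)).
  assert (S1 : 0 <= Sig1) by (apply sumZ_nonneg; intros; apply Rmult_le_pos; [apply Rabs_pos|left; apply Rpower_pos]).
  assert (Sp : 0 < Sig) by (unfold Sig; pose proof (Rpower_pos epsB (IZR kB - IZR hB)); pose proof (Rmult_lt_0_compat GB _ G_ H); lra).
  assert (PB : sumZ hB kB (fun l => b l * powerRZ e l) = b hB * powerRZ e hB + sumZ (hB+1) kB (fun l => b l * powerRZ e l)).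
  { rewrite (sumZ_split hB hB kB) by lia. rewrite sumZ_single. auto. }
  set (E := Rpower e (IZR hB + dB)).
  assert (T : Rabs (sumZ (hB+1) kB (fun l => b l * powerRZ e l)) <= Sig1 * E).
  { unfold Sig1. rewrite <- sumZ_scalr. apply sumZ_abs_le. intros i Hi. apply term_bound; try lra.
    assert (IZR (hB + 1) <= IZR i) by (apply IZR_le; lia). rewrite plus_IZR in H. lra. }
  assert (O : GB * Rpower e (IZR kB + dB) <= GB * Rpower epsB (IZR kB - IZR hB) * E).
  { rewrite Rmult_assoc. apply Rmult_le_compat_l. lra. apply pw; try lra. assert (IZR hB <= IZR kB) by (apply IZR_le; lia). lra. }
  pose proof (bB e (conj (proj1 He) e1)) as oB.
  assert (Hx : Sig * Rpower e dB <= Rabs (b hB) / 2).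
  { assert (Rpower e dB <= Rpower (recip_eps_tilde hB kB b dB GB epsB) dB) by (apply Rle_Rpower_l; lra).
    unfold recip_eps_tilde in H. rewrite Rpower_mult in H. replace (1 / dB * dB) with 1 in H by (field; lra).
    fold Sig1 Sig in H. rewrite Rpower_1 in H. 2:{ apply Rdiv_lt_0_compat. apply Rabs_pos_lt; auto. lra. }
    apply (Rmult_le_compat_l Sig) in H; [|lra]. replace (Sig * (Rabs (b hB) / (2 * Sig))) with (Rabs (b hB) / 2) in H by (field; lra). auto. }
  assert (EE : E = Rpower e dB * Rpower e (IZR hB)) by (unfold E; rewrite Rplus_comm, Rpower_plus; auto).
  replace (B e - b hB * powerRZ e hB) with ((B e - sumZ hB kB (fun l => b l * powerRZ e l)) + sumZ (hB+1) kB (fun l => b l * powerRZ e l)) by (rewrite PB; ring).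
  eapply Rle_trans. apply Rabs_triang.
  assert (Sig * E <= Rabs (b hB) / 2 * Rpower e (IZR hB)).
  { rewrite EE, <- Rmult_assoc. apply Rmult_le_compat_r; auto. left; apply Rpower_pos. }
  unfold Sig in H. lra. Qed.

Lemma Blow dom B hB kB b dB GB epsB : pivotal dom B hB kB b dB GB epsB ->
  forall e, 0 < e <= Rmin epsB (recip_eps_tilde hB kB b dB GB epsB) ->
  Rabs (b hB) / 2 * Rpower e (IZR hB) <= Rabs (B e) /\ 0 < Rabs (b hB) / 2 * Rpower e (IZR hB).
Proof. intros Hp e He. pose proof (Bbound _ _ _ _ _ _ _ _ Hp e He).
  destruct Hp as [_ bh]. pose proof (Rabs_pos_lt _ bh). pose proof (Rpower_pos e (IZR hB)).
  rewrite pz in H by lra. split.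
  - pose proof (Rabs_triang_inv (b hB * Rpower e (IZR hB)) (B e)).
    rewrite Rabs_mult, (Rabs_pos_eq (Rpower _ _)) in H2 by lra.
    rewrite <- Rabs_Ropp, Ropp_minus_distr in H. lra.
  - apply Rmult_lt_0_compat; lra. Qed.

Lemma eqb_shift i j n : Z.eqb (i + j) n = Z.eqb j (n - i).
Proof. destruct (Z.eqb_spec (i+j) n); destruct (Z.eqb_spec j (n - i)); auto; lia. Qed.

Lemma conv hB kB b c : b hB <> 0 -> recip_coefs hB kB b c -> forall n, (n <= kB - hB)%Z ->
  sumZ hB kB (fun i => sumZ (- hB) (kB - 2 * hB) (fun j => if Z.eqb (i + j) n then b i * c j else 0)) = if Z.eqb n 0 then 1 else 0.
Proof. intros bh [c0 cr] n Hn.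
  transitivity (sumZ hB kB (fun i => if Z.leb i (n + hB) then b i * c (n - i)%Z else 0)).
  { apply sumZ_ext; intros i Hi. transitivity (sumZ (- hB) (kB - 2 * hB) (fun j => if Z.eqb j (n - i) then b i * c j else 0)).
    apply sumZ_ext; intros; rewrite eqb_shift; auto.
    destruct (Z.leb_spec i (n + hB)). rewrite sumZ_ind_in by lia. auto. rewrite sumZ_ind_out by lia. auto. }
  destruct (Z.ltb_spec n 0).
  { replace (n =? 0)%Z with false by (symmetry; apply Z.eqb_neq; lia). apply sumZ_zero; intros.
    replace (x <=? n + hB)%Z with false by (symmetry; apply Z.leb_gt; lia). auto. }
  rewrite (sumZ_split hB (n + hB) kB) by lia. rewrite (sumZ_zero (n + hB + 1) kB).
  2:{ intros; replace (x <=? n + hB)%Z with false by (symmetry; apply Z.leb_gt; lia). auto. }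
  rewrite Rplus_0_r. rewrite (sumZ_ext hB (n+hB) _ (fun i => b i * c (n - i)%Z)).
  2:{ intros; replace (x <=? n + hB)%Z with true by (symmetry; apply Z.leb_le; lia). auto. }
  rewrite (sumZ_split hB hB (n + hB)) by lia. rewrite sumZ_single.
  replace (hB + 1)%Z with (1 + hB)%Z by lia. rewrite sumZ_shift.
  destruct (Z.eqb_spec n 0).
  - subst. rewrite sumZ_empty by lia. replace (0 - hB)%Z with (- hB)%Z by lia. rewrite c0. field; auto.
  - rewrite (sumZ_ext 1 n _ (fun m => b (hB + m)%Z * c (- hB + n - m)%Z)).
    2:{ intros; f_equal; f_equal; lia. }
    replace (n - hB)%Z with (- hB + n)%Z by lia. rewrite cr by lia. field; auto. Qed.

Lemma part4 dom (B : R -> R) (hB kB : Z) (b c : Z -> R) (dB GB epsB : R) :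
     pivotal dom B hB kB b dB GB epsB ->
     recip_coefs hB kB b c ->
     let epsC := recip_eps hB kB b dB GB epsB in
     epsC <= dom /\
     (forall e, 0 < e <= epsC -> B e <> 0) /\
     pivotal epsC (fun e => / B e) (- hB) (kB - 2 * hB) c dB (recip_G hB kB b c dB GB epsB) epsC.
Proof. intros Hp Hc S.
  pose proof Hp as [[hk [d_ [G_ [eps_ bB]]]] bh]. pose proof Hc as [c0 cr].
  pose proof (Rabs_pos_lt _ bh) as bpos.
  assert (S_ : 0 < S) by (apply Rmin_pos; [lra| apply Rpower_pos]).
  assert (SB : S <= epsB) by apply Rmin_l.
  assert (Bl := Blow _ _ _ _ _ _ _ _ Hp). fold (recip_eps hB kB b dB GB epsB) S in Bl.
  split; [lra|]. split.
  { intros e He Be. destruct (Bl e He). rewrite Be, Rabs_R0 in H. lra. }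
  assert (cpos : 0 < Rabs (c (- hB)%Z)) by (apply Rabs_pos_lt; rewrite c0; apply Rinv_neq_0_compat; auto).
  set (kC := (kB - 2 * hB)%Z).
  assert (IkC : IZR kC = IZR kB - 2 * IZR hB) by (unfold kC; rewrite minus_IZR, mult_IZR; auto).
  set (N := (kB - hB)%Z).
  set (D1 := sumZ hB kB (fun i => sumZ (- hB) kC (fun j => if (N <? i + j)%Z then Rabs (b i) * Rabs (c j) * Rpower S (IZR (i + j) - IZR kB + IZR hB - dB) else 0))).
  set (D2 := sumZ (- hB) kC (fun j => Rabs (c j) * Rpower S (IZR j + IZR hB))).
  assert (D1p : 0 <= D1).
  { apply sumZ_nonneg; intros; apply sumZ_nonneg; intros. destruct (N <? x+x0)%Z; [|lra].
    pose proof (Rabs_pos (b x)). pose proof (Rabs_pos (c x0)). pose proof (Rpower_pos S (IZR (x + x0) - IZR kB + IZR hB - dB)).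
    apply Rmult_le_pos; [apply Rmult_le_pos|]; lra. }
  assert (D2p : 0 < D2).
  { eapply Rlt_le_trans. 2: apply (sumZ_ge_elem _ _ _ (- hB)%Z). apply Rmult_lt_0_compat; auto. apply Rpower_pos.
    intros; apply Rmult_le_pos; [apply Rabs_pos | left; apply Rpower_pos]. unfold kC; lia. }
  assert (RG : recip_G hB kB b c dB GB epsB = / (Rabs (b hB) / 2) * (D1 + GB * D2)) by reflexivity.
  split; [|rewrite c0; apply Rinv_neq_0_compat; auto].
  split; [unfold kC; lia|]. split; [auto|]. split.
  { rewrite RG. apply Rmult_lt_0_compat. apply Rinv_0_lt_compat; lra. pose proof (Rmult_lt_0_compat GB D2 G_ D2p). lra. }
  split; [lra|].
  intros e He. assert (eB : 0 < e <= epsB) by lra. pose proof (bB e eB) as oB.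
  destruct (Bl e He) as [Bl1 Bl2].
  set (PB := sumZ hB kB (fun l => b l * powerRZ e l)) in *.
  set (PC := sumZ (- hB) kC (fun l => c l * powerRZ e l)).
  set (F := fun i j => b i * c j * powerRZ e (i + j)).
  set (Hi := sumZ hB kB (fun i => sumZ (- hB) kC (fun j => if (N <? i + j)%Z then F i j else 0))).
  set (Lo := sumZ hB kB (fun i => sumZ (- hB) kC (fun j => if (N <? i + j)%Z then 0 else F i j))).
  assert (PBC : PB * PC = Lo + Hi).
  { unfold PB, PC, Lo, Hi. rewrite sumZ_mult, <- sumZ_plus. apply sumZ_ext; intros. rewrite <- sumZ_plus. apply sumZ_ext; intros.
    rewrite <- split_if. unfold F. rewrite powerRZ_add by lra. ring. }
  assert (Lo1 : Lo = 1).
  { transitivity (sumZ hB kB (fun i => sumZ (- hB) kC (fun j => if ((0 <=? i+j) && (i+j <=? N))%Z%bool then b i * c j * powerRZ e (i+j)%Z else 0))).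
    { apply sumZ_ext; intros i Hi'; apply sumZ_ext; intros j Hj. unfold F.
      destruct (Z.ltb_spec N (i+j)).
      - replace ((0 <=? i + j) && (i + j <=? N))%Z%bool with false; auto. symmetry; apply andb_false_iff; right; apply Z.leb_gt; lia.
      - replace ((0 <=? i + j) && (i + j <=? N))%Z%bool with true; auto. symmetry; apply andb_true_iff; split; apply Z.leb_le; lia. }
    rewrite (regroupZ hB kB (- hB) kC 0 N (fun i j r => b i * c j * powerRZ e r)).
    transitivity (sumZ 0 N (fun r => if Z.eqb r 0 then powerRZ e r else 0)).
    2:{ rewrite sumZ_ind_in by (unfold N; lia). auto. }
    apply sumZ_ext; intros r Hr.
    transitivity ((if Z.eqb r 0 then 1 else 0) * powerRZ e r). 2:{ destruct (r =? 0)%Z; ring. }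
    rewrite <- (conv hB kB b c bh Hc r) by (unfold N in Hr; lia).
    rewrite <- sumZ_scalr. apply sumZ_ext; intros i _. rewrite <- sumZ_scalr.
    apply sumZ_ext; intros j _. destruct (i + j =? r)%Z; ring. }
  set (E1 := Rpower e (IZR kB - IZR hB + dB)).
  assert (High : Rabs Hi <= D1 * E1).
  { unfold Hi, D1. rewrite <- sumZ_scalr. apply sumZ_abs_le; intros i Hi'. rewrite <- sumZ_scalr. apply sumZ_abs_le; intros j Hj.
    destruct (Z.ltb_spec N (i+j)).
    - unfold F. rewrite <- (Rabs_mult (b i)). apply term_bound; try lra.
      assert (IZR (N + 1) <= IZR (i+j)) by (apply IZR_le; lia). unfold N in H0. rewrite plus_IZR, minus_IZR in H0. lra.
    - rewrite Rabs_R0; lra. }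
  assert (T1 : Rabs ((B e - PB) * PC) <= GB * D2 * E1).
  { rewrite Rabs_mult, Rmult_comm. eapply Rle_trans. apply Rmult_le_compat; try apply Rabs_pos. apply abs_P; lra. apply oB.
    match goal with |- ?X * (GB * ?Y) <= _ => replace (X * (GB * Y)) with (GB * (X * Y)) by ring end.
    rewrite Rmult_assoc. apply Rmult_le_compat_l. lra. unfold D2. apply tail_bound; try lra. intros j Hj.
    assert (IZR (- hB) <= IZR j) by (apply IZR_le; lia). rewrite opp_IZR in H. split; lra. }
  assert (Num : Rabs (1 - B e * PC) <= (D1 + GB * D2) * E1).
  { replace (1 - B e * PC) with (- Hi + - ((B e - PB) * PC)).
    2:{ replace (B e * PC) with (PB * PC + (B e - PB) * PC) by ring. rewrite PBC, Lo1. ring. }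
    eapply Rle_trans. apply Rabs_triang. rewrite Rabs_Ropp, Rabs_Ropp. lra. }
  assert (Bne : B e <> 0) by (intro Be; rewrite Be, Rabs_R0 in Bl1; lra).
  replace (/ B e - PC) with ((1 - B e * PC) * / B e) by (field; auto).
  rewrite Rabs_mult, Rabs_inv.
  assert (/ Rabs (B e) <= / (Rabs (b hB) / 2 * Rpower e (IZR hB))) by (apply Rinv_le_contravar; lra).
  eapply Rle_trans. apply Rmult_le_compat. apply Rabs_pos. left; apply Rinv_0_lt_compat; lra. apply Num. apply H.
  rewrite RG. fold kC. rewrite IkC.
  assert (E1 = Rpower e (IZR kB - 2 * IZR hB + dB) * Rpower e (IZR hB)) by (unfold E1; rewrite <- Rpower_plus; f_equal; ring).
  rewrite H0. pose proof (Rpower_pos e (IZR hB)). right. field. lra. Qed.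

Lemma part5b dom (A B : R -> R) (hA kA hB kB : Z) (a b c : Z -> R) (dA GA epsA dB GB epsB : R) :
 expansion dom A hA kA a dA GA epsA -> pivotal dom B hB kB b dB GB epsB -> recip_coefs hB kB b c ->
 let hD := (hA - hB)%Z in let kD := Z.min (kA - hB) (kB - 2*hB + hA) in
 let d := fun r => sumZ hA kA (fun i => sumZ (-hB) (kB - 2*hB) (fun j => if Z.eqb (i + j) r then a i * c j else 0)) in
 let dD := delta_mix (kA - hB) (kB - 2 * hB + hA) dA dB in
 let epsD := Rmin (Rmin epsA epsB) (recip_eps_tilde hB kB b dB GB epsB) in
 exists eps0', epsD <= eps0' <= dom /\ (forall e, 0<e<=eps0' -> B e <> 0) /\
   expansion eps0' (fun e => A e / B e) hD kD d dD (quot_G2 hA kA a dA GA hB kB b dB GB hD kD d dD epsD) epsD.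
Proof. intros HA Hp Hc hD kD d dD S.
  pose proof HA as [hkA [dA_ [GA_ [eA_ bA]]]].
  pose proof Hp as [[hk [dB_ [G_ [eps_ bB]]]] bh]. pose proof Hc as [c0 cr].
  pose proof (Rabs_pos_lt _ bh) as bpos.
  destruct (dm_props (kA - hB) (kB - 2 * hB + hA) dA dB dA_ dB_) as [dD_ [mA [mB [xA xB]]]].
  fold kD dD in dD_, mA, mB, xA, xB.
  rewrite !plus_IZR, !minus_IZR, !mult_IZR in *.
  set (tl := recip_eps_tilde hB kB b dB GB epsB) in *.
  assert (tl_ : 0 < tl) by apply Rpower_pos.
  assert (S_ : 0 < S) by (apply Rmin_pos; [apply Rmin_pos|]; lra).
  assert (SA : S <= epsA) by (pose proof (Rmin_l (Rmin epsA epsB) tl); pose proof (Rmin_l epsA epsB); unfold S; lra).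
  assert (SB : S <= epsB) by (pose proof (Rmin_l (Rmin epsA epsB) tl); pose proof (Rmin_r epsA epsB); unfold S; lra).
  assert (ST : S <= tl) by (apply Rmin_r).
  assert (SBt : forall e, 0 < e <= S -> 0 < e <= Rmin epsB tl) by (intros; split; [lra|]; apply Rmin_glb; lra).
  assert (Bl := Blow _ _ _ _ _ _ _ _ Hp). fold tl in Bl.
  set (m := Z.min kA (hA + kB - hB)).
  assert (kDm : kD = (m - hB)%Z) by (unfold kD, m; lia).
  assert (hm : (hA <= m <= kA)%Z) by (unfold m; lia).
  assert (mk : (m <= hA + kB - hB)%Z) by (unfold m; lia).
  exists S. split; [split; lra|]. split.
  { intros e He Be. destruct (Bl e (SBt e He)). rewrite Be, Rabs_R0 in H. lra. }
  assert (dzero : forall r, (r < hD)%Z -> d r = 0).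
  { intros r Hr. apply sumZ_zero; intros i Hi; apply sumZ_zero; intros j Hj.
    replace (i + j =? r)%Z with false by (symmetry; apply Z.eqb_neq; unfold hD in Hr; lia). auto. }
  assert (W : forall n, (hA <= n <= m)%Z -> sumZ hB kB (fun i => sumZ hD kD (fun j => if Z.eqb (i + j) n then b i * d j else 0)) = a n).
  { intros n Hn.
    transitivity (sumZ hB kB (fun i => b i * d (n - i)%Z)).
    { apply sumZ_ext; intros i Hi. transitivity (sumZ hD kD (fun j => if Z.eqb j (n - i) then b i * d j else 0)).
      apply sumZ_ext; intros; rewrite eqb_shift; auto.
      destruct (Z.leb_spec hD (n - i)). rewrite sumZ_ind_in by lia. auto. rewrite sumZ_ind_out by lia. rewrite dzero by lia. ring. }
    transitivity (sumZ hB kB (fun i => sumZ hA kA (fun i' => sumZ (-hB) (kB - 2*hB) (fun j => if Z.eqb (i + j) (n - i') then a i' * (b i * c j) else 0)))).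
    { apply sumZ_ext; intros i Hi. unfold d. rewrite <- sumZ_scal. apply sumZ_ext; intros i' _. rewrite <- sumZ_scal. apply sumZ_ext; intros j _.
      replace (i' + j =? n - i)%Z with (i + j =? n - i')%Z. destruct (i + j =? n - i')%Z; ring.
      destruct (Z.eqb_spec (i' + j) (n - i)); destruct (Z.eqb_spec (i+j) (n - i')); auto; lia. }
    rewrite sumZ_swap. transitivity (sumZ hA kA (fun i' => if Z.eqb i' n then a i' else 0)).
    2:{ apply sumZ_ind_in; lia. }
    apply sumZ_ext; intros i' Hi'.
    transitivity (a i' * sumZ hB kB (fun i => sumZ (- hB) (kB - 2 * hB) (fun j => if (i + j =? n - i')%Z then b i * c j else 0))).
    { rewrite <- sumZ_scal. apply sumZ_ext; intros i _. rewrite <- sumZ_scal. apply sumZ_ext; intros j _. destruct (i + j =? n - i')%Z; ring. }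
    rewrite conv by (auto; lia).
    destruct (Z.eqb_spec (n - i') 0); destruct (Z.eqb_spec i' n); try lia; ring. }
  set (H1 := sumZ hB kB (fun i => sumZ hD kD (fun j => if (m <? i + j)%Z then Rabs (b i) * Rabs (d j) * Rpower S (IZR (i + j) - IZR kD - IZR hB - dD) else 0))).
  set (H2 := sumZ (m + 1) kA (fun i => Rabs (cf hA kA a i) * Rpower S (IZR i - IZR hB - IZR kD - dD))).
  set (H3 := GA * Rpower S (IZR kA + dA - IZR hB - IZR kD - dD)).
  set (H4 := GB * sumZ hD kD (fun j => Rabs (d j) * Rpower S (IZR j + IZR kB + dB - IZR hB - IZR kD - dD))).
  assert (QG : quot_G2 hA kA a dA GA hB kB b dB GB hD kD d dD S = / (Rabs (b hB) / 2) * (H1 + H2 + H3 + H4)) by reflexivity.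
  assert (H1p : 0 <= H1).
  { apply sumZ_nonneg; intros; apply sumZ_nonneg; intros. destruct (m <? x+x0)%Z; [|lra].
    pose proof (Rabs_pos (b x)). pose proof (Rabs_pos (d x0)). pose proof (Rpower_pos S (IZR (x + x0) - IZR kD - IZR hB - dD)).
    apply Rmult_le_pos; [apply Rmult_le_pos|]; lra. }
  assert (H2p : 0 <= H2) by (apply sumZ_nonneg; intros; apply Rmult_le_pos; [apply Rabs_pos|left; apply Rpower_pos]).
  assert (H3p : 0 < H3) by (apply Rmult_lt_0_compat; [lra|apply Rpower_pos]).
  assert (H4p : 0 <= H4) by (apply Rmult_le_pos; [lra|]; apply sumZ_nonneg; intros; apply Rmult_le_pos; [apply Rabs_pos|left; apply Rpower_pos]).
  split; [unfold hD, kD; lia|]. split; [auto|]. split.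
  { rewrite QG. apply Rmult_lt_0_compat. apply Rinv_0_lt_compat; lra. lra. }
  split; [lra|].
  intros e He. assert (eA : 0 < e <= epsA) by lra. pose proof (bA e eA) as oA.
  assert (eB : 0 < e <= epsB) by lra. pose proof (bB e eB) as oB.
  destruct (Bl e (SBt e He)) as [Bl1 Bl2].
  set (PA := sumZ hA kA (fun l => a l * powerRZ e l)) in *.
  set (PB := sumZ hB kB (fun l => b l * powerRZ e l)) in *.
  set (PD := sumZ hD kD (fun l => d l * powerRZ e l)).
  set (F := fun i j => b i * d j * powerRZ e (i + j)).
  set (Hi := sumZ hB kB (fun i => sumZ hD kD (fun j => if (m <? i + j)%Z then F i j else 0))).
  set (Lo := sumZ hB kB (fun i => sumZ hD kD (fun j => if (m <? i + j)%Z then 0 else F i j))).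
  set (TA := sumZ (m + 1) kA (fun l => cf hA kA a l * powerRZ e l)).
  assert (PBD : PB * PD = Lo + Hi).
  { unfold PB, PD, Lo, Hi. rewrite sumZ_mult, <- sumZ_plus. apply sumZ_ext; intros. rewrite <- sumZ_plus. apply sumZ_ext; intros.
    rewrite <- split_if. unfold F. rewrite powerRZ_add by lra. ring. }
  assert (PAs : PA = sumZ hA m (fun l => a l * powerRZ e l) + TA).
  { unfold PA, TA. rewrite (sumZ_split hA m kA) by lia. f_equal. apply sumZ_ext; intros. unfold cf.
    replace (Z.leb hA x && Z.leb x kA)%bool with true; auto. symmetry; apply andb_true_iff; split; apply Z.leb_le; lia. }
  assert (LoE : Lo = sumZ hA m (fun l => a l * powerRZ e l)).
  { transitivity (sumZ hB kB (fun i => sumZ hD kD (fun j => if ((hA <=? i+j) && (i+j <=? m))%Z%bool then b i * d j * powerRZ e (i+j)%Z else 0))).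
    { apply sumZ_ext; intros i Hi'; apply sumZ_ext; intros j Hj. unfold F.
      destruct (Z.ltb_spec m (i+j)).
      - replace ((hA <=? i + j) && (i + j <=? m))%Z%bool with false; auto. symmetry; apply andb_false_iff; right; apply Z.leb_gt; lia.
      - replace ((hA <=? i + j) && (i + j <=? m))%Z%bool with true; auto. symmetry; apply andb_true_iff; split; apply Z.leb_le; unfold hD in Hj; lia. }
    rewrite (regroupZ hB kB hD kD hA m (fun i j r => b i * d j * powerRZ e r)).
    apply sumZ_ext; intros r Hr. rewrite <- (W r Hr).
    rewrite <- sumZ_scalr. apply sumZ_ext; intros i _. rewrite <- sumZ_scalr.
    apply sumZ_ext; intros j _. destruct (i + j =? r)%Z; ring. }
  set (E2 := Rpower e (IZR hB + IZR kD + dD)).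
  assert (IkD : IZR kD = IZR m - IZR hB) by (rewrite kDm, minus_IZR; auto).
  assert (Im1 : IZR hA <= IZR m) by (apply IZR_le; lia).
  assert (High : Rabs Hi <= H1 * E2).
  { unfold Hi, H1. rewrite <- sumZ_scalr. apply sumZ_abs_le; intros i Hi'. rewrite <- sumZ_scalr. apply sumZ_abs_le; intros j Hj.
    destruct (Z.ltb_spec m (i+j)).
    - unfold F. rewrite <- (Rabs_mult (b i)). apply term_bound; try lra.
      assert (IZR (m + 1) <= IZR (i+j)) by (apply IZR_le; lia). rewrite plus_IZR in H0. lra.
    - rewrite Rabs_R0; lra. }
  assert (TAb : Rabs TA <= H2 * E2).
  { unfold TA, H2. rewrite <- sumZ_scalr. apply sumZ_abs_le; intros i Hi'. apply term_bound; try lra.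
    assert (IZR (m + 1) <= IZR i) by (apply IZR_le; lia). rewrite plus_IZR in H. lra. }
  assert (OA : Rabs (A e - PA) <= H3 * E2).
  { eapply Rle_trans. apply oA. unfold H3. rewrite Rmult_assoc. apply Rmult_le_compat_l. lra. apply pw; try lra. }
  assert (OB : Rabs ((B e - PB) * PD) <= H4 * E2).
  { rewrite Rabs_mult, Rmult_comm. eapply Rle_trans. apply Rmult_le_compat; try apply Rabs_pos. apply abs_P; lra. apply oB.
    match goal with |- ?X * (GB * ?Y) <= _ => replace (X * (GB * Y)) with (GB * (X * Y)) by ring end.
    unfold H4. rewrite Rmult_assoc. apply Rmult_le_compat_l. lra. apply tail_bound; try lra. intros j Hj.
    assert (IZR hD <= IZR j) by (apply IZR_le; lia). unfold hD in H. rewrite minus_IZR in H. split; lra. }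
  assert (Num : Rabs (A e - B e * PD) <= (H1 + H2 + H3 + H4) * E2).
  { replace (A e - B e * PD) with ((A e - PA) + TA + - Hi + - ((B e - PB) * PD)).
    2:{ replace (B e * PD) with (PB * PD + (B e - PB) * PD) by ring. rewrite PBD, LoE, PAs. ring. }
    eapply Rle_trans. apply Rabs_triang. eapply Rle_trans. apply Rplus_le_compat_r. apply Rabs_triang.
    eapply Rle_trans. apply Rplus_le_compat_r. apply Rplus_le_compat_r. apply Rabs_triang.
    rewrite !Rabs_Ropp. lra. }
  assert (Bne : B e <> 0) by (intro Be; rewrite Be, Rabs_R0 in Bl1; lra).
  replace (A e / B e - PD) with ((A e - B e * PD) * / B e) by (field; auto).
  rewrite Rabs_mult, Rabs_inv.
  assert (/ Rabs (B e) <= / (Rabs (b hB) / 2 * Rpower e (IZR hB))) by (apply Rinv_le_contravar; lra).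
  eapply Rle_trans. apply Rmult_le_compat. apply Rabs_pos. left; apply Rinv_0_lt_compat; lra. apply Num. apply H.
  rewrite QG.
  assert (E2 = Rpower e (IZR kD + dD) * Rpower e (IZR hB)) by (unfold E2; rewrite <- Rpower_plus; f_equal; ring).
  rewrite H0. pose proof (Rpower_pos e (IZR hB)). right. field. lra. Qed.

Theorem lemma2 (eps0 : R) (Heps0 : 0 < eps0 <= 1) :
  (* (i) scalar multiple *)
  (forall (A : R -> R) (hA kA : Z) (a : Z -> R) (dA GA epsA c : R),
     expansion eps0 A hA kA a dA GA epsA ->
     forall e, 0 < e <= epsA ->
       Rabs (c * A e - sumZ hA kA (fun l => c * a l * powerRZ e l))
         <= Rabs c * GA * Rpower e (IZR kA + dA))
  /\
  (* (ii) sum *)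
  (forall (A B : R -> R) (hA kA hB kB : Z) (a b : Z -> R) (dA GA epsA dB GB epsB : R),
     expansion eps0 A hA kA a dA GA epsA ->
     expansion eps0 B hB kB b dB GB epsB ->
     expansion eps0 (fun e => A e + B e) (Z.min hA hB) (Z.min kA kB)
       (fun r => cf hA kA a r + cf hB kB b r)
       (delta_mix kA kB dA dB)
       (sum_G hA kA a dA GA hB kB b dB GB (Rmin epsA epsB))
       (Rmin epsA epsB))
  /\
  (* (iii) product *)
  (forall (A B : R -> R) (hA kA hB kB : Z) (a b : Z -> R) (dA GA epsA dB GB epsB : R),
     expansion eps0 A hA kA a dA GA epsA ->
     expansion eps0 B hB kB b dB GB epsB ->
     let kC := Z.min (kA + hB) (kB + hA) in
     let dC := delta_mix (kA + hB) (kB + hA) dA dB in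
     let epsC := Rmin epsA epsB in
     expansion eps0 (fun e => A e * B e) (hA + hB) kC
       (prod_coef hA kA a hB kB b) dC
       (prod_G hA kA a dA GA hB kB b dB GB kC dC epsC) epsC)
  /\
  (* (iv) reciprocal *)
  (forall (B : R -> R) (hB kB : Z) (b c : Z -> R) (dB GB epsB : R),
     pivotal eps0 B hB kB b dB GB epsB ->
     recip_coefs hB kB b c ->
     let epsC := recip_eps hB kB b dB GB epsB in
     exists eps0' : R, epsC <= eps0' <= eps0 /\
       (forall e, 0 < e <= eps0' -> B e <> 0) /\
       pivotal eps0' (fun e => / B e) (- hB) (kB - 2 * hB) c dB
         (recip_G hB kB b c dB GB epsB) epsC)
  /\
  (* (v) quotient *)
  (forall (A B : R -> R) (hA kA hB kB : Z) (a b c : Z -> R) (dA GA epsA dB GB epsB : R),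
     expansion eps0 A hA kA a dA GA epsA ->
     pivotal eps0 B hB kB b dB GB epsB ->
     recip_coefs hB kB b c ->
     let hC := (- hB)%Z in
     let kC := (kB - 2 * hB)%Z in
     let dC := dB in
     let epsC := recip_eps hB kB b dB GB epsB in
     let GC := recip_G hB kB b c dB GB epsB in
     let hD := (hA - hB)%Z in
     let kD := Z.min (kA - hB) (kB - 2 * hB + hA) in
     let d := fun r => sumZ hA kA (fun i => sumZ hC kC (fun j =>
                 if Z.eqb (i + j) r then a i * c j else 0)) in
     let dD := delta_mix (kA - hB) (kB - 2 * hB + hA) dA dB in
     (* first choice of eps_D, G_D *)
     (let epsD := Rmin epsA epsC in
      exists eps0' : R, epsD <= eps0' <= eps0 /\
        (forall e, 0 < e <= eps0' -> B e <> 0) /\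
        expansion eps0' (fun e => A e / B e) hD kD d dD
          (prod_G hA kA a dA GA hC kC c dC GC kD dD epsD) epsD)
     /\
     (* second choice of eps_D, G_D *)
     (let epsD := Rmin (Rmin epsA epsB) (recip_eps_tilde hB kB b dB GB epsB) in
      exists eps0' : R, epsD <= eps0' <= eps0 /\
        (forall e, 0 < e <= eps0' -> B e <> 0) /\
        expansion eps0' (fun e => A e / B e) hD kD d dD
          (quot_G2 hA kA a dA GA hB kB b dB GB hD kD d dD epsD) epsD)).
Proof.
  split. { intros. eapply part1; eauto. }
  split. { intros. apply part2; auto. }
  split. { intros A B hA kA hB kB a b dA GA epsA dB GB epsB HA HB kC dC epsC.
    assert (Rmin epsA epsB <= eps0) by (destruct HA as [_ [_ [_ [? _]]]]; pose proof (Rmin_l epsA epsB); lra).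
    exact (part3 eps0 eps0 eps0 A B hA kA hB kB a b dA GA epsA dB GB epsB HA HB H). }
  split. { intros B hB kB b c dB GB epsB Hp Hc epsC.
    destruct (part4 eps0 B hB kB b c dB GB epsB Hp Hc) as [h1 [h2 h3]].
    exists epsC. split; [split; [lra|auto]|]. split; auto. }
  intros A B hA kA hB kB a b c dA GA epsA dB GB epsB HA Hp Hc hC kC dC epsC GC hD kD d dD. split.
  - destruct (part4 eps0 B hB kB b c dB GB epsB Hp Hc) as [h1 [h2 h3]].
    exists epsC. split. { split; [apply Rmin_r|auto]. } split; auto.
    exact (part3 eps0 epsC epsC A (fun e => / B e) hA kA (- hB) (kB - 2 * hB) a c dA GA epsA dB GC epsC HA (proj1 h3) (Rmin_r _ _)).
  - exact (part5b eps0 A B hA kA hB kB a b c dA GA epsA dB GB epsB HA Hp Hc).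
Qed.
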